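(* For every $n\ge1$, $\mathcal{C}^*(n)\le 1-L(n)$, where $L(n)$ is the optimal value of the following linear program in variables $y_0,\dots,y_{\lfloor n/2\rfloor}\in\mathbb{R}$: minimize $3^ny_0$ subject to $y_j\ge0$ for all $j$, $\sum_{j=0}^{\lfloor n/2\rfloor}K_i(2j)y_j\ge0$ for all $i=0,\dots,n$, and $\sum_{j=0}^{\lfloor n/2\rfloor}3^{n-2j}y_j=1$.
   Context: The concentratable entanglement of an $n$-qubit pure state is $\mathcal{C}(\ket{\psi})=1-\frac{1}{2^{n}}\sum_{\alpha\subseteq [n]}\mathrm{Tr}[\rho_\alpha^2]$ ($\rho_\alpha$ the reduced state on $\alpha$, $\mathrm{Tr}[\rho_\emptyset^2]=1$), and $\mathcal{C}^*(n)=\max_{\ket{\psi}\in(\mathbb{C}^2)^{\otimes n}}\mathcal{C}(\ket{\psi})$. The quaternary Krawtchouk polynomials are $K_w(l)=\sum_{j=0}^{w}\binom{l}{j}\binom{n-l}{w-j}(-1)^j3^{w-j}$ for $w,l\in\{0,\dots,n\}$. *)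

(* Defs.v *)
From HB Require Import structures.
From mathcomp Require Import all_boot all_order all_algebra.
From mathcomp Require Import all_classical all_reals.
From mathcomp Require Import complex.
Set Implicit Arguments. Unset Strict Implicit. Unset Printing Implicit Defensive.
Import Order.TTheory GRing.Theory Num.Theory.
Local Open Scope ring_scope.

Section QE.
Variable R : realType.
Local Notation C := (complex R).

(* computational basis configurations of n qubits *)
Definition config (n : nat) := {ffun 'I_n -> bool}.

Definition normalized (n : nat) (psi : {ffun config n -> C}) : Prop :=
  \sum_(x : config n) psi x * conjc (psi x) = 1.

(* a configuration supported on alpha (zero outside alpha): canonical
   representative of a basis state of the subsystem alpha *)
Definition supp_on (n : nat) (alpha : {set 'I_n}) (x : config n) : bool :=
  [forall i, (i \notin alpha) ==> ~~ x i].

Definition glue (n : nat) (alpha : {set 'I_n}) (a c : config n) : config n :=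
  [ffun i => if i \in alpha then a i else c i].

(* reduced density matrix rho_alpha = Tr_{complement alpha} |psi><psi| ,
   entries indexed by basis states a, b of subsystem alpha *)
Definition rdm (n : nat) (alpha : {set 'I_n}) (psi : {ffun config n -> C})
  (a b : config n) : C :=
  \sum_(c : config n | supp_on (~: alpha) c)
     psi (glue alpha a c) * conjc (psi (glue alpha b c)).

Definition purity (n : nat) (alpha : {set 'I_n}) (psi : {ffun config n -> C}) : C :=
  \sum_(a : config n | supp_on alpha a) \sum_(b : config n | supp_on alpha b)
     rdm alpha psi a b * rdm alpha psi b a.

(* concentratable entanglement; Tr[rho_alpha^2] is real, we take its real part *)
Definition conc_ent (n : nat) (psi : {ffun config n -> C}) : R :=
  1 - (2 ^+ n)^-1 * \sum_(alpha : {set 'I_n}) complex.Re (purity alpha psi).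

Definition Cstar (n : nat) : R :=
  sup [set conc_ent psi | psi in [set psi : {ffun config n -> C} | normalized psi]]%classic.

Definition kraw (n w l : nat) : R :=
  \sum_(0 <= j < w.+1) ('C(l, j) * 'C(n - l, w - j))%:R * (-1) ^+ j * 3 ^+ (w - j).

Definition LP_feasible (n : nat) (y : 'I_(n./2.+1) -> R) : Prop :=
  (forall j, 0 <= y j) /\
  (forall i : 'I_n.+1, 0 <= \sum_(j < n./2.+1) kraw n i (2 * j) * y j) /\
  \sum_(j < n./2.+1) 3 ^+ (n - 2 * j) * y j = 1.

Definition LPval (n : nat) : R :=
  inf [set 3 ^+ n * y ord0 | y in [set y : 'I_(n./2.+1) -> R | LP_feasible y]]%classic.

End QE.

(* Main.v *)
Require Import Defs.
From HB Require Import structures.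
From mathcomp Require Import all_boot all_order all_algebra.
From mathcomp Require Import complex.
From mathcomp Require Import ring lra.
From mathcomp Require Import reals.
Set Implicit Arguments. Unset Strict Implicit. Unset Printing Implicit Defensive.
Import Order.TTheory GRing.Theory Num.Theory.
Local Open Scope ring_scope.

Section Comb.
Variable (K : comPzRingType) (n : nat).

Lemma sumsetP (F : 'I_n -> bool -> K) :
  \sum_(A : {set 'I_n}) \prod_k F k (k \in A) = \prod_k (F k false + F k true).
Proof.
have -> : \prod_k (F k false + F k true) = \prod_k \sum_(b : bool) F k b.
  by apply: eq_bigr => k _; rewrite big_bool addrC.
rewrite bigA_distr_bigA /=.
rewrite (reindex (fun f : {ffun 'I_n -> bool} => [set k | f k])) /=.
  by apply: eq_bigr => f _; apply: eq_bigr => k _; rewrite inE.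
exists (fun A : {set 'I_n} => [ffun k => k \in A]) => [f _|A _].
  by apply/ffunP => k; rewrite ffunE inE.
by apply/setP => k; rewrite !inE ffunE.
Qed.

Lemma expr_card (x : K) (A : {set 'I_n}) :
  x ^+ #|A| = \prod_k (if k \in A then x else 1).
Proof. by rewrite -big_mkcond /= prodr_const. Qed.

End Comb.

Lemma subset_prod (K : comPzRingType) n (A B : {set 'I_n}) :
  (A \subset B)%:R = \prod_k (if (k \in A) && (k \notin B) then 0 else 1 : K).
Proof.
case: (boolP (A \subset B)) => [/fintype.subsetP sAB|/subsetPn [k kA kB]].
  rewrite big1 // => k _; case: (boolP (k \in A)) => //= /sAB ->.
  by [].
by rewrite (bigD1 k) //= kA kB mul0r.
Qed.

Lemma if_nat (K : pzSemiRingType) (b : bool) (x : K) : (if b then x else 0) = b%:R * x.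
Proof. by case: b; rewrite ?mul1r ?mul0r. Qed.

Lemma expn_prod (K : comPzRingType) n (x : K) : x ^+ n = \prod_(k < n) x.
Proof. by rewrite prodr_const card_ord. Qed.

Section LPcomb.
Variable R : realFieldType.
Variable n : nat.
Implicit Types (p : {set 'I_n} -> R).

Definition sfun p (b : {set 'I_n}) : R :=
  \sum_(g : {set 'I_n}) (-1) ^+ #|g :&: ~: b| * p g.
Definition afun p (t : {set 'I_n}) : R :=
  \sum_(g : {set 'I_n} | g \subset t) (-1) ^+ #|t :\: g| * 2 ^+ #|g| * p g.

Variable p : {set 'I_n} -> R.
Hypothesis pC : forall g, p (~: g) = p g.

Lemma IDA e :
  \sum_(d : {set 'I_n}) ((-1) ^+ #|e :&: d| * 3 ^+ #|e :\: d| * 3 ^+ #|d|) * sfun p (~: d)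
  = 3 ^+ #|e| * 2 ^+ n * afun p (~: e).
Proof.
rewrite /sfun /afun.
under eq_bigr do rewrite setCK mulr_sumr.
rewrite exchange_big /= mulr_sumr [RHS]big_mkcond [RHS](reindex_inj (@setC_inj _)) /=.
apply: eq_bigr => g _.
rewrite pC if_nat.
transitivity ((\sum_(d : {set 'I_n}) ((-1) ^+ #|e :&: d| * 3 ^+ #|e :\: d| * 3 ^+ #|d|
   * (-1) ^+ #|g :&: d|)) * p g).
  by rewrite mulr_suml; apply: eq_bigr => d _; rewrite !mulrA.
rewrite !mulrA; congr (_ * _).
pose F := (fun (k : 'I_n) (b : bool) =>
   (if (k \in e) && b then -1 else 1) * (if ~~ b && (k \in e) then 3 else 1) *
   (if b then 3 else 1) * (if (k \in g) && b then -1 else 1) : R).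
transitivity (\sum_(d : {set 'I_n}) \prod_k F k (k \in d)).
  apply: eq_bigr => d _; rewrite !expr_card -!big_split /=.
  by apply: eq_bigr => k _; rewrite !inE.
rewrite sumsetP /F subset_prod !expr_card expn_prod -!big_split /=.
apply: eq_bigr => k _; rewrite !inE.
by case: (k \in e); case: (k \in g) => /=; ring.
Qed.


Lemma s_odd b : odd #|~: b| -> sfun p b = 0.
Proof.
move=> hodd.
suff h : sfun p b = - sfun p b by lra.
rewrite {1}/sfun (reindex_inj (@setC_inj _)) /= /sfun -sumrN.
apply: eq_bigr => g _; rewrite pC -mulNr; congr (_ * _).
have e1 : (-1) ^+ #|~: b| = -1 :> R by rewrite -signr_odd hodd expr1.
transitivity ((-1) ^+ #|~: b| * (-1) ^+ #|g :&: ~: b| : R); last by rewrite e1 mulN1r.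
rewrite !expr_card -big_split /=; apply: eq_bigr => k _; rewrite !inE.
by case: (k \in g); case: (k \in b) => /=; ring.
Qed.

Lemma sum_s : \sum_b sfun p b = 2 ^+ n * p set0.
Proof.
have key g : \sum_(b : {set 'I_n}) (-1) ^+ #|g :&: ~: b| = \prod_k (if k \in g then 0 else 2 : R).
  pose F := (fun (k : 'I_n) (bb : bool) => if (k \in g) && ~~ bb then -1 else 1 : R).
  transitivity (\sum_(b : {set 'I_n}) \prod_k F k (k \in b)).
    by apply: eq_bigr => b _; rewrite expr_card; apply: eq_bigr => k _; rewrite !inE.
  rewrite sumsetP /F; apply: eq_bigr => k _.
  by case: (k \in g) => /=; ring.
rewrite /sfun exchange_big /=.
under eq_bigr do rewrite -mulr_suml key.
rewrite (bigD1 set0) //= [X in _ + X]big1 ?addr0.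
  congr (_ * _); rewrite expn_prod; apply: eq_bigr => k _.
  by rewrite inE.
move=> g /set0Pn [k kg].
by rewrite (bigD1 k) //= kg mul0r ?mulr0 ?mul0r.
Qed.

Lemma s_T : sfun p setT = \sum_g p g.
Proof.
by rewrite /sfun; apply: eq_bigr => g _; rewrite setCT setI0 cards0 expr0 mul1r.
Qed.

End LPcomb.

Lemma sep_sets n (A B d : {set 'I_n}) : A \subset d -> B \subset ~: d ->
  [/\ (A :|: B) :&: d = A, (A :|: B) :&: ~: d = B & A :&: B = set0].
Proof.
move=> /subsetP sA /subsetP sB; split; apply/setP => k; rewrite !inE;
  have := sA k; have := sB k; rewrite !inE;
  by case: (k \in A); case: (k \in B); case: (k \in d) => //= h1 h2;
    first [ by move: (h1 isT) | by move: (h2 isT) ].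
Qed.

Lemma card_split n (d : {set 'I_n}) w j : (j <= w)%N ->
  #|[set e : {set 'I_n} | (#|e| == w) && (#|e :&: d| == j)]| =
    ('C(#|d|, j) * 'C(#|~: d|, w - j))%N.
Proof.
move=> jw.
pose D := setX [set A : {set 'I_n} | A \subset d & #|A| == j]
               [set B : {set 'I_n} | B \subset ~: d & #|B| == (w - j)%N].
have -> : [set e : {set 'I_n} | (#|e| == w) && (#|e :&: d| == j)] =
    (fun AB : {set 'I_n} * {set 'I_n} => AB.1 :|: AB.2) @: D.
  apply/setP => e; rewrite inE; apply/andP/imsetP.
  - case=> /eqP he /eqP hj; exists (e :&: d, e :&: ~: d).
      rewrite inE /= !inE !subsetIr hj eqxx /=.
      by rewrite -setDE -he -hj -(cardsID d e) addKn.
    by rewrite /= -setIUr setUCr setIT.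
  - case=> [[A B]] /setXP [] /=; rewrite !inE => /andP[sAd /eqP cA] /andP[sBd /eqP cB] ->.
    have [h1 h2 h3] := sep_sets sAd sBd.
    by rewrite h1 cardsU h3 cards0 subn0 cA cB subnKC // eqxx.
rewrite card_in_imset ?cardsX ?cards_draws //.
move=> [A B] [A' B'] /setXP [] /=; rewrite !inE => /andP[sAd _] /andP[sBd _].
move=> /and3P [/andP[sAd' _] sBd' _] /= hU.
have [h1 h2 _] := sep_sets sAd sBd; have [h1' h2' _] := sep_sets sAd' sBd'; rewrite /= in h1' h2' hU.
have eA : A = A' by rewrite -h1 -h1' hU.
have eB : B = B' by rewrite -h2 -h2' hU.
by rewrite eA eB.
Qed.

Lemma kraw_set (R : realType) n (d : {set 'I_n}) (w : nat) :
  \sum_(e : {set 'I_n} | #|e| == w) (-1) ^+ #|e :&: d| * 3 ^+ #|e :\: d|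
  = kraw R n w #|d|.
Proof.
rewrite /kraw big_mkord.
transitivity (\sum_(e : {set 'I_n} | #|e| == w) \sum_(j < w.+1)
   ((#|e :&: d| == j)%:R * ((-1) ^+ j * 3 ^+ (w - j)) : R)).
  apply: eq_bigr => e /eqP he.
  have hj : (#|e :&: d| < w.+1)%N by rewrite ltnS -he subset_leq_card // subsetIl.
  rewrite (bigD1 (Ordinal hj)) //= eqxx mul1r big1 ?addr0.
    by rewrite -he -(cardsID d e) addKn.
  move=> j hjne; suff -> : (#|e :&: d| == j) = false by rewrite mul0r.
  by apply/negbTE; apply: contra hjne => /eqP h; apply/eqP/val_inj.
rewrite exchange_big /=; apply: eq_bigr => j _.
rewrite -mulr_suml.
transitivity ((#|[set e : {set 'I_n} | (#|e| == w) && (#|e :&: d| == j)]|)%:R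
   * ((-1) ^+ j * 3 ^+ (w - j)) : R).
  congr (_ * _).
  rewrite -sum1_card natr_sum.
  rewrite big_mkcond [RHS]big_mkcond /=; apply: eq_bigr => e _; rewrite inE.
  by case: (#|e| == w); case: (_ == _).
rewrite card_split; last by rewrite -ltnS.
have -> : (n - #|d| = #|~: d|)%N.
  have h : (#|d| + #|~: d| = n)%N by rewrite cardsC card_ord.
  have hd : (#|d| <= n)%N by have := max_card d; rewrite card_ord.
  by apply/eqP; rewrite eq_sym -(eqn_add2l #|d|) h subnKC.
by rewrite mulrA.
Qed.

Section LPfeas.
Variable R : realType.
Variable n : nat.

Lemma sel (k : nat) (h : nat -> R) : (k <= n)%N -> ~~ odd k ->
  \sum_(j < n./2.+1) ((k == 2 * j)%N)%:R * h j = h (k./2).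
Proof.
move=> kn ek.
have hk : (k./2 < n./2.+1)%N by rewrite ltnS half_leq.
have ek2 : k = (2 * k./2)%N by rewrite mul2n -{1}(odd_double_half k) (negbTE ek).
rewrite (bigD1 (Ordinal hk)) //= -ek2 eqxx mul1r big1 ?addr0 //.
move=> j hj; suff -> : (k == 2 * j)%N = false by rewrite mul0r.
apply/negbTE; apply: contra hj => /eqP hkj; apply/eqP/val_inj => /=.
by rewrite hkj mul2n doubleK.
Qed.

Lemma sel_odd (k : nat) (h : nat -> R) : odd k ->
  \sum_(j < n./2.+1) ((k == 2 * j)%N)%:R * h j = 0.
Proof.
move=> ok; rewrite big1 // => j _.
suff -> : (k == 2 * j)%N = false by rewrite mul0r.
by apply/negbTE; apply: contraL ok => /eqP ->; rewrite mul2n odd_double.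
Qed.

Variable p : {set 'I_n} -> R.
Hypothesis pC : forall g, p (~: g) = p g.

Definition yv (j : 'I_(n./2.+1)) : R :=
  9 ^+ j / 6 ^+ n * \sum_(b : {set 'I_n} | #|~: b| == (2 * j)%N) sfun p b.

Lemma sum_y (g : nat -> R) (G : {set 'I_n} -> R) :
  (forall b, ~~ odd #|~: b| -> g (#|~: b|./2) * 9 ^+ (#|~: b|./2) = G b) ->
  \sum_(j < n./2.+1) g j * yv j = (6 ^+ n)^-1 * \sum_b G b * sfun p b.
Proof.
move=> hG.
transitivity (\sum_(j < n./2.+1) \sum_(b : {set 'I_n})
    (6 ^+ n)^-1 * (((#|~: b| == 2 * j)%N)%:R * (g j * 9 ^+ j)) * sfun p b).
  apply: eq_bigr => j _; rewrite /yv mulr_sumr big_mkcond mulr_sumr /=.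
  by apply: eq_bigr => b _; rewrite if_nat; ring.
rewrite exchange_big /= mulr_sumr; apply: eq_bigr => b _.
have hb : (#|~: b| <= n)%N by have := max_card (~: b); rewrite card_ord.
case: (boolP (odd #|~: b|)) => ob.
  by rewrite (s_odd pC ob) !mulr0 big1 // => j _; rewrite mulr0.
rewrite -mulr_suml -mulr_sumr mulrA; congr (_ * _ * _).
by rewrite (sel (fun j => g j * 9 ^+ j)) // hG.
Qed.


Lemma six_pow : (6 : R) ^+ n = 3 ^+ n * 2 ^+ n.
Proof. by rewrite -exprMn; congr (_ ^+ _); ring. Qed.

Lemma nine_pow k : (9 : R) ^+ k = 3 ^+ (2 * k).
Proof. by rewrite exprM; congr (_ ^+ _); ring. Qed.

Lemma LP_ok : p set0 = 1 -> (forall b, 0 <= sfun p b) -> (forall t, 0 <= afun p t) ->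
  LP_feasible yv /\ 3 ^+ n * yv ord0 = (2 ^+ n)^-1 * \sum_g p g.
Proof.
move=> hp0 hs ha.
have h3 : (3 : R) ^+ n != 0 by rewrite expf_neq0 // pnatr_eq0.
have h2 : (2 : R) ^+ n != 0 by rewrite expf_neq0 // pnatr_eq0.
split; last first.
  rewrite /yv (big_pred1 setT); last first.
    move=> b; rewrite /= cards_eq0; apply/eqP/eqP => [h|->]; last by rewrite setCT.
    by rewrite -(setCK b) h setC0.
  rewrite s_T expr0 mul1r six_pow invfM; field.
  by rewrite h3 h2.
split; [|split].
- move=> j; rewrite /yv; apply: mulr_ge0; first by rewrite divr_ge0 // exprn_ge0.
  by apply: sumr_ge0 => b _.
- move=> i.
  rewrite (@sum_y (fun j => kraw R n i (2 * j)) (fun b => kraw R n i #|~: b| * 3 ^+ #|~: b|)); last first.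
    move=> b eb; have ek : (2 * (#|~: b|./2) = #|~: b|)%N.
      by rewrite mul2n -[RHS](odd_double_half #|~: b|) (negbTE eb).
    by rewrite nine_pow ek.
  apply: mulr_ge0; first by rewrite invr_ge0 exprn_ge0.
  rewrite (reindex_inj (@setC_inj _)) /=.
  under eq_bigr do rewrite setCK -kraw_set mulr_suml mulr_suml.
  rewrite exchange_big /=; apply: sumr_ge0 => e _.
  rewrite (eq_bigr (fun d => ((-1) ^+ #|e :&: d| * 3 ^+ #|e :\: d| * 3 ^+ #|d|) * sfun p (~: d))).
    by rewrite IDA // mulr_ge0 // mulr_ge0 // exprn_ge0.
  by [].
- rewrite (@sum_y (fun j => 3 ^+ (n - 2 * j)) (fun b => 3 ^+ n)); last first.
    move=> b eb; have ek : (2 * (#|~: b|./2) = #|~: b|)%N.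
      by rewrite mul2n -[RHS](odd_double_half #|~: b|) (negbTE eb).
    rewrite nine_pow -exprD ek.
    rewrite subnK //; by have := max_card (~: b); rewrite card_ord.
  rewrite -mulr_sumr sum_s // hp0 mulr1 six_pow invfM; field.
  by rewrite h3 h2.
Qed.

End LPfeas.
Lemma ReD (R : realType) (x y : complex R) : complex.Re (x + y) = complex.Re x + complex.Re y.
Proof. by case: x; case: y. Qed.

Lemma Re_sum (R : realType) (I : Type) (r : seq I) (P : pred I) (F : I -> complex R) :
  complex.Re (\sum_(i <- r | P i) F i) = \sum_(i <- r | P i) complex.Re (F i).
Proof. exact: (big_morph _ (@ReD R) (erefl _)). Qed.

Lemma Re_realM (R : realType) (a : R) (z : complex R) : complex.Re ((a%:C)%C * z) = a * complex.Re z.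
Proof. by case: z => x y /=; ring. Qed.

Lemma Re_norm_ge0 (R : realType) (z : complex R) : 0 <= complex.Re (z * conjc z).
Proof. by case: z => x y /=; rewrite mulrN opprK addr_ge0 // -expr2 sqr_ge0. Qed.

Lemma sum_ind (K : pzSemiRingType) (I : finType) (P : pred I) (F : I -> K) :
  \sum_(i | P i) F i = \sum_i (P i)%:R * F i.
Proof. by rewrite big_mkcond; apply: eq_bigr => i _; rewrite if_nat. Qed.

Section Quantum.
Variable R : realType.
Local Notation C := (complex R).
Variable n : nat.
Local Notation cfg := (config n).

Definition res (al : {set 'I_n}) (x : cfg) : cfg := [ffun i => (i \in al) && x i].

Lemma supp_onP (al : {set 'I_n}) (x : cfg) :
  reflect (forall i, i \notin al -> x i = false) (supp_on al x).
Proof.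
apply: (iffP forallP) => h i; first by move=> hi; have := h i; rewrite hi /= => /negbTE.
by apply/implyP => /h ->.
Qed.

Lemma supp_res (al : {set 'I_n}) (x : cfg) : supp_on al (res al x).
Proof. by apply/supp_onP => i hi; rewrite ffunE (negbTE hi). Qed.

Lemma res_glue (al : {set 'I_n}) (a c : cfg) : supp_on al a -> res al (glue al a c) = a.
Proof.
move/supp_onP => ha; apply/ffunP => i; rewrite !ffunE.
by case: (boolP (i \in al)) => //= hi; rewrite ha.
Qed.

Lemma resC_glue (al : {set 'I_n}) (a c : cfg) : supp_on (~: al) c -> res (~: al) (glue al a c) = c.
Proof.
move/supp_onP => hc; apply/ffunP => i; rewrite !ffunE inE.
case: (boolP (i \in al)) => //= hi; rewrite hc //= inE negbK //.
Qed.

Lemma glue_res (al : {set 'I_n}) (x : cfg) : glue al (res al x) (res (~: al) x) = x.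
Proof. by apply/ffunP => i; rewrite !ffunE inE; case: (i \in al). Qed.

Lemma glue_sum al (F : cfg -> C) :
  \sum_(a | supp_on al a) \sum_(c | supp_on (~: al) c) F (glue al a c) = \sum_x F x.
Proof.
rewrite pair_big_dep /=.
rewrite (reindex_onto (fun x => (res al x, res (~: al) x)) (fun ac => glue al ac.1 ac.2)) /=.
  apply: eq_big => x; first by rewrite !supp_res glue_res eqxx.
  by rewrite glue_res.
by move=> [a c] /= /andP [ha hc]; rewrite res_glue // resC_glue.
Qed.

Lemma glue_glue (al : {set 'I_n}) (u v w z : cfg) : glue al (glue al u v) (glue al w z) = glue al u z.
Proof. by apply/ffunP => i; rewrite !ffunE; case: (i \in al). Qed.

Lemma purityE al (psi : {ffun cfg -> C}) :
  purity al psi = \sum_x \sum_y psi x * psi y * conjc (psi (glue al y x)) * conjc (psi (glue al x y)).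
Proof.
rewrite /purity /rdm.
transitivity (\sum_(a | supp_on al a) \sum_(c | supp_on (~: al) c)
  \sum_(b | supp_on al b) \sum_(c' | supp_on (~: al) c')
   (fun x y => psi x * psi y * conjc (psi (glue al y x)) * conjc (psi (glue al x y)))
     (glue al a c) (glue al b c')).
  apply: eq_bigr => a _; rewrite exchange_big /=; apply: eq_bigr => b _.
  rewrite mulr_suml; apply: eq_bigr => c _; rewrite mulr_sumr; apply: eq_bigr => c' _.
  by rewrite !glue_glue /=; ring.
rewrite -[RHS](glue_sum al); apply: eq_bigr => a _; apply: eq_bigr => c _.
by rewrite -[RHS](glue_sum al).
Qed.


Lemma glue0 (x y : cfg) : glue set0 y x = x.
Proof. by apply/ffunP => i; rewrite ffunE inE. Qed.

Lemma glueC (g : {set 'I_n}) (x y : cfg) : glue (~: g) y x = glue g x y.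
Proof. by apply/ffunP => i; rewrite !ffunE inE; case: (i \in g). Qed.

Lemma purity0 (psi : {ffun cfg -> C}) : normalized psi -> purity set0 psi = 1.
Proof.
rewrite /normalized => hn; rewrite purityE.
transitivity ((\sum_x psi x * conjc (psi x)) * (\sum_y psi y * conjc (psi y))).
  rewrite mulr_suml; apply: eq_bigr => x _; rewrite mulr_sumr; apply: eq_bigr => y _.
  by rewrite !glue0; ring.
by rewrite hn mulr1.
Qed.

Lemma purityC (g : {set 'I_n}) (psi : {ffun cfg -> C}) : purity (~: g) psi = purity g psi.
Proof.
rewrite !purityE; apply: eq_bigr => x _; apply: eq_bigr => y _.
by rewrite !glueC; ring.
Qed.


Lemma sum_sets1 (K : comPzRingType) : \sum_(g : {set 'I_n}) (1 : K) = 2 ^+ n.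
Proof.
pose F := (fun (_ : 'I_n) (_ : bool) => 1 : K).
transitivity (\sum_(g : {set 'I_n}) \prod_k F k (k \in g)).
  by apply: eq_bigr => g _; rewrite big1.
by rewrite sumsetP /F expn_prod; apply: eq_bigr => k _; ring.
Qed.

Definition sdiff (g d : {set 'I_n}) : {set 'I_n} := [set k | (k \in g) (+) (k \in d)].

Lemma sdiffK g : involutive (sdiff g) * True.
Proof. split => //; move=> d; apply/setP => k; rewrite !inE; by case: (k \in g); case: (k \in d). Qed.

Definition sig (g : {set 'I_n}) (z : cfg * cfg) : cfg * cfg := (glue g z.2 z.1, glue g z.1 z.2).

Lemma glue_id (g : {set 'I_n}) (x : cfg) : glue g x x = x.
Proof. by apply/ffunP => i; rewrite ffunE; case: (i \in g). Qed.

Lemma sigK g : involutive (sig g).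
Proof. by move=> [x y]; rewrite /sig /= !glue_glue !glue_id. Qed.

Lemma sig_comp g d z : sig d (sig g z) = sig (sdiff g d) z.
Proof.
case: z => x y; rewrite /sig /=; congr (_, _); apply/ffunP => i; rewrite !ffunE !inE;
  by case: (i \in g); case: (i \in d).
Qed.

Variable psi : {ffun cfg -> C}.

Definition Phi (z : cfg * cfg) : C := psi z.1 * psi z.2.

Lemma purity_sig g : purity g psi = \sum_z Phi z * conjc (Phi (sig g z)).
Proof.
rewrite purityE pair_big /=; apply: eq_bigr => [[x y]] _ /=.
by rewrite /Phi /= rmorphM /=; ring.
Qed.

Definition chi (b g : {set 'I_n}) : C := (-1) ^+ #|g :&: ~: b|.

Lemma chiM b g d : chi b (sdiff g d) = chi b g * chi b d.
Proof.
rewrite /chi !expr_card -big_split /=; apply: eq_bigr => k _; rewrite !inE.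
by case: (k \in g); case: (k \in d); case: (k \in b) => /=; ring.
Qed.

Lemma chi2 b g : chi b g * chi b g = 1.
Proof. by rewrite -expr2 /chi sqrr_sign. Qed.

Lemma conj_chi b g : conjc (chi b g) = chi b g.
Proof. by rewrite /chi rmorph_sign. Qed.

Definition wv b z : C := \sum_g chi b g * Phi (sig g z).

Lemma wv_key b :
  \sum_z wv b z * conjc (wv b z) = 2 ^+ n * \sum_g chi b g * purity g psi.
Proof.
transitivity (\sum_g \sum_d chi b g * chi b d * purity (sdiff g d) psi).
  transitivity (\sum_z \sum_g \sum_d chi b g * chi b d * (Phi (sig g z) * conjc (Phi (sig d z)))).
    apply: eq_bigr => z _; rewrite /wv rmorph_sum mulr_suml; apply: eq_bigr => g _.
    rewrite mulr_sumr; apply: eq_bigr => d _; rewrite rmorphM /= conj_chi; ring.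
  rewrite exchange_big; apply: eq_bigr => g _ /=; rewrite exchange_big; apply: eq_bigr => d _ /=.
  rewrite -mulr_sumr purity_sig; congr (_ * _).
  rewrite (reindex_inj (can_inj (sigK g))) /=; apply: eq_bigr => z _.
  by rewrite sigK sig_comp.
transitivity (\sum_(g : {set 'I_n}) \sum_d chi b d * purity d psi).
  apply: eq_bigr => g _; rewrite (reindex_inj (can_inj (sdiffK g).1)) /=.
  apply: eq_bigr => d _; rewrite (sdiffK g).1 chiM mulrA chi2 mul1r //.
by rewrite -sum_sets1 mulr_suml; apply: eq_bigr => g _; rewrite mul1r.
Qed.

Lemma s_ge0 b : 0 <= sfun (fun g => complex.Re (purity g psi)) b.
Proof.
have h2 : (0 : R) < 2 ^+ n by rewrite exprn_gt0.
rewrite -(pmulr_rge0 _ h2).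
have -> : 2 ^+ n * sfun (fun g => complex.Re (purity g psi)) b =
    complex.Re (\sum_z wv b z * conjc (wv b z)).
  rewrite wv_key.
  have -> : (2 ^+ n : C) = ((2 ^+ n : R))%:C%C by rewrite rmorphXn /= rmorph_nat.
  rewrite Re_realM Re_sum /sfun; congr (_ * _); apply: eq_bigr => g _.
  have -> : chi b g = (((-1) ^+ #|g :&: ~: b| : R))%:C%C by rewrite rmorph_sign.
  by rewrite Re_realM.
by rewrite Re_sum; apply: sumr_ge0 => z _; apply: Re_norm_ge0.
Qed.

Definition flip (u : {set 'I_n}) (x : cfg) : cfg := [ffun i => x i (+) (i \in u)].

Lemma flipK u : involutive (flip u).
Proof. by move=> x; apply/ffunP => i; rewrite !ffunE; case: (x i); case: (i \in u). Qed.

Definition par (v : {set 'I_n}) (x : cfg) : C := (-1) ^+ #|[set i in v | x i]|.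

Definition ev (u v : {set 'I_n}) : C := \sum_x conjc (psi (flip u x)) * psi x * par v x.

Definition agree (al : {set 'I_n}) (x x' : cfg) : bool := [forall k in al, x k == x' k].

Lemma par_sum (al : {set 'I_n}) (x x' : cfg) :
  \sum_(v : {set 'I_n} | v \subset al) par v x * par v x' = (agree al x x')%:R * 2 ^+ #|al|.
Proof.
pose F := (fun (k : 'I_n) (b : bool) =>
  (if b && (k \notin al) then 0 else 1) * (if b && x k then -1 else 1) *
  (if b && x' k then -1 else 1) : C).
transitivity (\sum_(v : {set 'I_n}) \prod_k F k (k \in v)).
  rewrite big_mkcond /=; apply: eq_bigr => v _; rewrite if_nat subset_prod /par !expr_card.
  by rewrite -!big_split /=; apply: eq_bigr => k _; rewrite !inE /F mulrA.
rewrite sumsetP /F.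
case: (boolP (agree al x x')) => hag.
  rewrite [in RHS]/= [in RHS]mul1r [in RHS]expr_card; apply: eq_bigr => k _.
  case: (boolP (k \in al)) => hk /=; last by ring.
  have := forallP hag k; rewrite hk /= => /eqP ->.
  by case: (x' k) => /=; ring.
rewrite mul0r; move: hag => /forallPn [k]; rewrite negb_imply => /andP [hk hne].
rewrite (bigD1 k) //= hk /=.
by move: hne; case: (x k); case: (x' k) => //= _;
  rewrite [X in X * _](_ : _ = 0) ?mul0r //; ring.
Qed.


Lemma conj_par v x : conjc (par v x) = par v x.
Proof. by rewrite /par rmorph_sign. Qed.

Lemma evA (al u : {set 'I_n}) :
  \sum_(v : {set 'I_n} | v \subset al) ev u v * conjc (ev u v) =
  2 ^+ #|al| * \sum_x \sum_x' (agree al x x')%:R *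
     (conjc (psi (flip u x)) * psi x * psi (flip u x') * conjc (psi x')).
Proof.
transitivity (\sum_(v : {set 'I_n} | v \subset al) \sum_x \sum_x'
   (conjc (psi (flip u x)) * psi x * psi (flip u x') * conjc (psi x')) * (par v x * par v x')).
  apply: eq_bigr => v _; rewrite /ev rmorph_sum mulr_suml; apply: eq_bigr => x _.
  rewrite mulr_sumr; apply: eq_bigr => x' _; rewrite !rmorphM /= conjcK conj_par; ring.
rewrite exchange_big mulr_sumr; apply: eq_bigr => x _ /=.
rewrite exchange_big mulr_sumr; apply: eq_bigr => x' _ /=.
by rewrite -mulr_sumr par_sum; ring.
Qed.

Definition u0 (al : {set 'I_n}) (x y : cfg) : {set 'I_n} := [set i in al | x i != y i].

Lemma u0_uniq (al u : {set 'I_n}) (x y : cfg) :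
  (u \subset al) && agree al x (flip u y) = (u == u0 al x y).
Proof.
apply/idP/eqP => [/andP [/subsetP su /forallP ha]|->].
  apply/setP => i; rewrite !inE; move: (ha i) (su i); rewrite !ffunE.
  by case: (i \in u); case: (i \in al); case: (x i); case: (y i) => //= _ /(_ isT).
apply/andP; split; first by apply/subsetP => i; rewrite inE => /andP [].
apply/forallP => i; apply/implyP => hi; rewrite !ffunE !inE hi /=.
by case: (x i); case: (y i).
Qed.

Lemma flip_u0x (al : {set 'I_n}) (x y : cfg) : flip (u0 al x y) x = glue al y x.
Proof.
apply/ffunP => i; rewrite !ffunE !inE.
by case: (i \in al); case: (x i); case: (y i).
Qed.

Lemma flip_u0y (al : {set 'I_n}) (x y : cfg) : flip (u0 al x y) y = glue al x y.
Proof.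
apply/ffunP => i; rewrite !ffunE !inE.
by case: (i \in al); case: (x i); case: (y i).
Qed.

Lemma evB (al : {set 'I_n}) (x : cfg) :
  \sum_(u : {set 'I_n} | u \subset al) \sum_x' (agree al x x')%:R *
     (conjc (psi (flip u x)) * psi x * psi (flip u x') * conjc (psi x')) =
  \sum_y psi x * psi y * conjc (psi (glue al y x)) * conjc (psi (glue al x y)).
Proof.
transitivity (\sum_(u : {set 'I_n} | u \subset al) \sum_y (agree al x (flip u y))%:R *
     (conjc (psi (flip u x)) * psi x * psi y * conjc (psi (flip u y)))).
  apply: eq_bigr => u _; rewrite (reindex_inj (can_inj (flipK u))) /=.
  by apply: eq_bigr => y _; rewrite flipK.
rewrite exchange_big /=; apply: eq_bigr => y _.
rewrite big_mkcond (bigD1 (u0 al x y)) //= big1 ?addr0.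
  have := u0_uniq al (u0 al x y) x y; rewrite eqxx => /andP [-> ->].
    by rewrite flip_u0x flip_u0y mulr1n mul1r; ring.
move=> u hu; have := u0_uniq al u x y; rewrite (negbTE hu).
by case: (u \subset al) => //= ->; rewrite mul0r.
Qed.

Lemma ev_key (al : {set 'I_n}) :
  \sum_(u : {set 'I_n} | u \subset al) \sum_(v : {set 'I_n} | v \subset al) ev u v * conjc (ev u v)
  = 2 ^+ #|al| * purity al psi.
Proof.
under eq_bigr do rewrite evA.
rewrite -mulr_sumr purityE; congr (_ * _).
rewrite exchange_big /=; apply: eq_bigr => x _.
by rewrite -evB.
Qed.


Definition qv (u v : {set 'I_n}) : R := complex.Re (ev u v * conjc (ev u v)).

Lemma two_p (g : {set 'I_n}) :
  2 ^+ #|g| * complex.Re (purity g psi) =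
  \sum_(u : {set 'I_n} | u \subset g) \sum_(v : {set 'I_n} | v \subset g) qv u v.
Proof.
have := ev_key g => /(congr1 (@complex.Re R)).
have -> : (2 ^+ #|g| : C) = ((2 ^+ #|g| : R))%:C%C by rewrite rmorphXn /= rmorph_nat.
rewrite Re_realM => <-; rewrite Re_sum; apply: eq_bigr => u _.
by rewrite Re_sum.
Qed.

Lemma a_ge0 t : 0 <= afun (fun g => complex.Re (purity g psi)) t.
Proof.
rewrite /afun (_ : \sum_(g : {set 'I_n} | g \subset t) _ = \sum_(u : {set 'I_n}) \sum_(v : {set 'I_n})
  (\sum_(g : {set 'I_n}) ((g \subset t)%:R * (u \subset g)%:R * (v \subset g)%:R *
      (-1) ^+ #|t :\: g|)) * qv u v); last first.
  transitivity (\sum_(g : {set 'I_n}) \sum_(u : {set 'I_n}) \sum_(v : {set 'I_n})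
     ((g \subset t)%:R * (u \subset g)%:R * (v \subset g)%:R * (-1) ^+ #|t :\: g|) * qv u v).
    rewrite sum_ind; apply: eq_bigr => g _ /=.
    rewrite -mulrA two_p sum_ind mulr_sumr mulr_sumr; apply: eq_bigr => u _.
    rewrite sum_ind mulr_sumr mulr_sumr mulr_sumr; apply: eq_bigr => v _; ring.
  rewrite exchange_big; apply: eq_bigr => u _ /=; rewrite exchange_big /=.
  by apply: eq_bigr => v _; rewrite mulr_suml.
apply: sumr_ge0 => u _; apply: sumr_ge0 => v _; apply: mulr_ge0; last first.
  exact: Re_norm_ge0.
pose F := (fun (k : 'I_n) (b : bool) =>
  (if b && (k \notin t) then 0 else 1) * (if (k \in u) && ~~ b then 0 else 1) *
  (if (k \in v) && ~~ b then 0 else 1) * (if ~~ b && (k \in t) then -1 else 1) : R).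
rewrite (_ : \sum_(g : {set 'I_n}) _ = \sum_(g : {set 'I_n}) \prod_k F k (k \in g)); last first.
  apply: eq_bigr => g _; rewrite !subset_prod expr_card -!big_split /=.
  by apply: eq_bigr => k _; rewrite !inE.
rewrite sumsetP /F; apply: prodr_ge0 => k _.
by case: (k \in t); case: (k \in u); case: (k \in v) => /=; lra.
Qed.

End Quantum.


From mathcomp Require Import all_classical all_reals.
Unset Implicit Arguments.

Lemma conc_bound (R : realType) (n : nat) (psi : {ffun config n -> R[i]}) :
  normalized psi -> conc_ent psi <= 1 - LPval R n.
Proof.
move=> hpsi.
pose p := fun g : {set 'I_n} => complex.Re (purity g psi).
have pC : forall g, p (~: g) = p g by move=> g; rewrite /p purityC.
have p0 : p finset.set0 = 1 by rewrite /p purity0.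
have [hf hobj] := LP_ok pC p0 (s_ge0 psi) (a_ge0 psi).
have hle : LPval R n <= 3 ^+ n * yv p ord0.
  apply: ge_inf; last by exists (yv p).
  exists 0 => _ [y hy <-]; apply: mulr_ge0; first exact: exprn_ge0.
  by case: hy => h _; apply: h.
rewrite /conc_ent; move: hle; rewrite hobj /p.
by move=> h; rewrite lerD2l lerN2.
Qed.

Theorem mainTheorem11 (R : realType) (n : nat) (hn : (1 <= n)%N) :
  Cstar R n <= 1 - LPval R n.
Proof.
rewrite /Cstar; apply: ge_sup; last by move=> _ [psi hpsi <-]; apply: conc_bound.
pose x0 : config n := [ffun _ => false].
pose psi0 : {ffun config n -> R[i]} := [ffun x => if x == x0 then 1 else 0].
exists (conc_ent psi0); exists psi0 => //.
change (normalized psi0); rewrite /normalized (bigD1 x0) //= big1 ?addr0.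
  by rewrite /psi0 ffunE eqxx mul1r conjc1.
by move=> x hx; rewrite /psi0 ffunE (negbTE hx) mul0r.
Qed.
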